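(* Fix any ordering $e_1,\dots,e_n$ of $V$, and let $S_L$ be the set of elements selected by Algorithm 3 among the positions $i\le\beta n$. Suppose $f(S_L)\ge\alpha\,\mathrm{OPT}$ with $\alpha=3\cdot10^{-3}$, and $0.9\beta k\le|\mathcal O_L|\le1.1\beta k$, where $\mathcal O_L$ is the set of elements of $\mathcal O$ at positions $i\le\beta n$. Then the output $S$ of Algorithm 3 satisfies $f(S)\ge(0.5+9\cdot10^{-12})\mathrm{OPT}$.
   Context: $V$ is a finite ground set with $|V|=n$; $f:2^V\to\mathbb{R}_{\ge0}$ is monotone, submodular and normalized; $f(X\mid Y)=f(X\cup Y)-f(Y)$, $f(e\mid Y)=f(\{e\}\mid Y)$. $k\le n$ is a positive integer, $\mathrm{OPT}=\max\{f(S):S\subseteq V,|S|\le k\}$, and $\mathcal O$ is a fixed set with $|\mathcal O|=k$, $f(\mathcal O)=\mathrm{OPT}$. Algorithm 3 (knows $\mathrm{OPT}$), with $\beta=10^{-3}$, $\epsilon=10^{-8}$, $\delta=3\cdot10^{-11}$: start with $S=\emptyset$; for $i=1,\dots,n$, add $e_i$ to $S$ if $|S|<k$ and either ($i\le\beta n$ and $f(e_i\mid S)\ge\frac{1+\epsilon}{2}\cdot\frac{\mathrm{OPT}}{k}$) or ($i>\beta n$ and $f(e_i\mid S)\ge\frac{1-\delta}{2}\cdot\frac{\mathrm{OPT}}{k}$); return $S$. *)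

(* Defs.v *)
From HB Require Import structures.
From mathcomp Require Import all_boot all_order all_algebra.
Set Implicit Arguments. Unset Strict Implicit. Unset Printing Implicit Defensive.
Import Order.TTheory GRing.Theory Num.Theory.
Local Open Scope ring_scope.

Section Defs.
Variables (T : finType) (R : realFieldType).

Definition monotone_set_fun (f : {set T} -> R) : Prop :=
  forall A B : {set T}, A \subset B -> f A <= f B.

Definition submodular (f : {set T} -> R) : Prop :=
  forall A B : {set T}, f (A :|: B) + f (A :&: B) <= f A + f B.

Definition normalized (f : {set T} -> R) : Prop := f set0 = 0.

Definition nonneg_set_fun (f : {set T} -> R) : Prop := forall A, 0 <= f A.

Definition marg (f : {set T} -> R) (e : T) (S : {set T}) : R := f (e |: S) - f S.

Definition OPT (f : {set T} -> R) (k : nat) : R :=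
  \big[Num.max/0]_(S : {set T} | (#|S| <= k)%N) f S.

Definition beta : R := (1000%:R)^-1.
Definition eps : R := (10%:R ^+ 8)^-1.
Definition delta : R := 3%:R / 10%:R ^+ 11.
Definition alpha : R := 3%:R / 1000%:R.

(* one step of Algorithm 3 at (1-indexed) position i, with n = |V| *)
Definition alg3_accept (f : {set T} -> R) (k n : nat) (opt : R)
    (i : nat) (e : T) (S : {set T}) : bool :=
  (#|S| < k)%N &&
  (((i%:R <= beta * n%:R) && ((1 + eps) / 2%:R * (opt / k%:R) <= marg f e S))
   || ((beta * n%:R < i%:R) && ((1 - delta) / 2%:R * (opt / k%:R) <= marg f e S))).

Fixpoint alg3_run (f : {set T} -> R) (k n : nat) (opt : R)
    (i : nat) (s : seq T) (S : {set T}) : {set T} :=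
  match s with
  | [::] => S
  | e :: s' =>
      alg3_run f k n opt i.+1 s'
        (if alg3_accept f k n opt i e S then e |: S else S)
  end.

Definition alg3 (f : {set T} -> R) (k : nat) (s : seq T) : {set T} :=
  alg3_run f k (size s) (OPT f k) 1 s set0.

Definition early_part (s : seq T) (A : {set T}) : {set T} :=
  [set x in A | ((index x s).+1%:R <= beta * (size s)%:R :> R)].

End Defs.

(* Main.v *)
Require Import Defs.
From HB Require Import structures.
From mathcomp Require Import all_boot all_order all_algebra.
From mathcomp Require Import lra zify.
Import Order.TTheory GRing.Theory Num.Theory.
Local Open Scope ring_scope.

Section Gen.
Variables (T : finType) (R : realFieldType) (f : {set T} -> R).
Hypotheses (mono : monotone_set_fun f) (subm : submodular f).

Lemma marg_ge0 e (S : {set T}) : 0 <= marg f e S.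
Proof. by rewrite /marg subr_ge0; apply: mono; apply: subsetUr. Qed.

Lemma marg_DR e (A B : {set T}) : A \subset B -> marg f e B <= marg f e A.
Proof.
move=> AB; case: (boolP (e \in B)) => eB.
  rewrite /marg; have -> : e |: B = B by apply/setUidPr; rewrite sub1set.
  by rewrite subrr -/(marg f e A) marg_ge0.
have := subm (e |: A) B.
have -> : (e |: A) :|: B = e |: B by rewrite -setUA (setUidPr AB).
have -> : (e |: A) :&: B = A.
  apply/setP=> x; rewrite !inE; case: (eqVneq x e) => [->|_] /=.
    rewrite (negbTE eB); apply/esym/negbTE/negP => /(subsetP AB); by rewrite (negbTE eB).
  by apply/andb_idr => /(subsetP AB).
rewrite /marg; lra.
Qed.

Lemma submod_sum (S : {set T}) (r : seq T) :
  f (S :|: [set x in r]) <= f S + \sum_(x <- r) marg f x S.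
Proof.
elim: r => [|x r IH]; first by rewrite big_nil addr0; rewrite le_eqVlt; apply/orP; left; apply/eqP; congr f; apply/setP=> y; rewrite !inE orbF.
rewrite big_cons.
have -> : S :|: [set y in x :: r] = x |: (S :|: [set y in r]).
  by apply/setP=> y; rewrite !inE; case: (y == x); rewrite ?orbT.
have h1 : marg f x (S :|: [set y in r]) <= marg f x S by apply: marg_DR; apply: subsetUl.
move: h1; rewrite {1}/marg; lra.
Qed.
End Gen.

Set Implicit Arguments. Unset Strict Implicit.


Section Run.
Variables (T : finType) (R : realFieldType) (f : {set T} -> R) (k n : nat) (opt : R).
Hypotheses (mono : monotone_set_fun f) (subm : submodular f).
Local Notation run := (alg3_run f k n opt).

Lemma run_cat i s1 s2 (S : {set T}) : run i (s1 ++ s2) S = run (i + size s1) s2 (run i s1 S).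
Proof. by elim: s1 i S => [|x s1 IH] i S /=; rewrite ?addn0 // IH addSnnS. Qed.

Definition seg_thr (i : nat) (s : seq T) (tau : R) :=
  forall j e (S : {set T}), (i <= j < i + size s)%N ->
    alg3_accept f k n opt j e S = (#|S| < k)%N && (tau <= marg f e S).

Lemma seg_thr_tl i x s tau : seg_thr i (x :: s) tau -> seg_thr i.+1 s tau.
Proof. move=> H j e S /andP[h1 h2]; apply: H; apply/andP; split=> /=; lia. Qed.

Lemma run_grow i s (S : {set T}) : S \subset run i s S.
Proof.
elim: s i S => [|x s IH] i S /=; first exact: subxx.
apply: subset_trans (IH _ _); case: ifP => _; [exact: subsetUr | exact: subxx].
Qed.

Lemma run_sub i s (S : {set T}) x : x \in run i s S -> (x \in S) || (x \in s).
Proof.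
elim: s i S => [|y s IH] i S /=; first by move->.
move=> /IH /orP[|xs]; last by rewrite inE xs !orbT.
case: ifP => _; last by move->.
by rewrite !inE => /orP[->|->]; rewrite ?orbT.
Qed.

Lemma run_card i s (S : {set T}) : (#|S| <= k)%N -> (#|run i s S| <= k)%N.
Proof.
elim: s i S => [|y s IH] i S //= hS; apply: IH.
case: ifP => // /andP[hk _]; rewrite cardsU1; case: (y \in S) => /=; lia.
Qed.

Lemma run_gain i s (S : {set T}) tau : seg_thr i s tau ->
  f S + tau * #|run i s S|%:R <= f (run i s S) + tau * #|S|%:R.
Proof.
elim: s i S => [|y s IH] i S /=; first by lra.
move=> H; have := IH i.+1 (if alg3_accept f k n opt i y S then y |: S else S) (seg_thr_tl H).
rewrite (H i); last by rewrite /=; apply/andP; split; lia.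
case: ifP => [/andP[_ hm]|_]; last by [].
case: (boolP (y \in S)) => yS.
  by have -> : y |: S = S by apply/setUidPr; rewrite sub1set.
rewrite cardsU1 yS /= natrD.
move: hm; rewrite /marg; lra.
Qed.

Lemma run_rej i s (S : {set T}) tau x : seg_thr i s tau -> x \in s -> x \notin run i s S ->
  (#|run i s S| < k)%N -> marg f x (run i s S) < tau.
Proof.
elim: s i S => [|y s IH] i S //= H.
rewrite inE => /orP[/eqP ->|xs]; last by apply: IH => //; exact: seg_thr_tl H.
have Hacc := H i y S; rewrite /= in Hacc.
case hacc: (alg3_accept f k n opt i y S) => yn hk.
  by move: yn; rewrite (subsetP (run_grow _ _ _)) // setU11.
have sub := run_grow i.+1 s S.
have hS : (#|S| < k)%N by apply: leq_ltn_trans hk; apply: subset_leq_card.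
rewrite Hacc in hacc; last by apply/andP; split; lia.
move: hacc; rewrite hS /= => /negbT; rewrite -ltNge => hm.
apply: le_lt_trans _ hm; exact: marg_DR.
Qed.
End Run.

Set Strict Implicit.


Lemma arith_full (R : realFieldType) (z u K a fS fSL : R) :
  0 < z -> z * (10000%:R * 10000%:R) = 1 -> 0 <= u -> 0 <= a -> a <= K ->
  (1 + z) / 2%:R * u * a <= fSL ->
  fSL + (1 - 3%:R * (z * (1000%:R)^-1)) / 2%:R * u * K <= fS + (1 - 3%:R * (z * (1000%:R)^-1)) / 2%:R * u * a ->
  3%:R / 1000%:R * (K * u) <= fSL ->
  (1 / 2%:R + 9%:R * (z * (10000%:R)^-1)) * (K * u) <= fS.
Proof.
move=> z0 hz u0 a0 aK g1 g2 hSL.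
have uK : 0 <= u * K by apply: mulr_ge0 => //; lra.
have zuK : 0 <= z * (u * K) by apply: mulr_ge0 => //; lra.
case: (lerP (200%:R * a) K) => ha.
  have h1 : 0 <= u * (K / 200%:R - a) by apply: mulr_ge0 => //; lra.
  have h2 : 0 <= z * (u * (K / 200%:R - a)) by apply: mulr_ge0 => //; lra.
  have h3 : z <= 1 / 10000%:R by lra.
  have h4 : 0 <= (1 / 10000%:R - z) * (u * K) by apply: mulr_ge0 => //; lra.
  have h5 : 0 <= z * (u * a) by apply: mulr_ge0 => //; [lra|apply: mulr_ge0].
  lra.
have h1 : 0 <= u * (a - K / 200%:R) by apply: mulr_ge0 => //; lra.
have h2 : 0 <= z * (u * (a - K / 200%:R)) by apply: mulr_ge0 => //; lra.
lra.
Qed.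

Lemma arith_part (R : realFieldType) (z u K b fS opt : R) :
  0 < z -> 0 <= u -> 0 <= b -> 0 <= K -> opt = K * u ->
  b <= 11%:R / 10%:R * (1000%:R)^-1 * K ->
  opt <= fS + ((1 + z) / 2%:R * u * b + (1 - 3%:R * (z * (1000%:R)^-1)) / 2%:R * u * (K - b)) ->
  (1 / 2%:R + 9%:R * (z * (10000%:R)^-1)) * opt <= fS.
Proof.
move=> z0 u0 b0 K0 -> hb g.
have h1 : 0 <= u * (11%:R / 10%:R * (1000%:R)^-1 * K - b) by apply: mulr_ge0 => //; lra.
have h2 : 0 <= z * (u * (11%:R / 10%:R * (1000%:R)^-1 * K - b)) by apply: mulr_ge0 => //; lra.
have zuK : 0 <= z * (u * K) by apply: mulr_ge0; [lra|apply: mulr_ge0].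
have zub : 0 <= z * (u * b) by apply: mulr_ge0 => //; [lra| apply: mulr_ge0].
lra.
Qed.


Theorem mainTheorem8 (T : finType) (R : realFieldType) (f : {set T} -> R)
    (k : nat) (O : {set T}) (s : seq T) :
  nonneg_set_fun f -> monotone_set_fun f -> submodular f -> normalized f ->
  (0 < k)%N -> (k <= #|T|)%N ->
  #|O| = k -> f O = OPT f k ->
  uniq s -> (forall x : T, x \in s) ->
  let S := alg3 f k s in
  let SL := early_part R s S in
  let OL := early_part R s O in
  alpha R * OPT f k <= f SL ->
  9%:R / 10%:R * beta R * k%:R <= #|OL|%:R ->
  #|OL|%:R <= 11%:R / 10%:R * beta R * k%:R ->
  (1 / 2%:R + 9%:R / 10%:R ^+ 12) * OPT f k <= f S.
Proof.
move=> nn mono subm norm k0 kT cardO fO us full S SL OL hSL _ hOL.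
set opt := OPT f k in fO hSL *.
set n := size s.
pose p := fun j : nat => (j%:R <= beta R * n%:R :> R).
set m := find (fun j => ~~ p j.+1) (iota 0 n).
have mn : (m <= n)%N by rewrite /m -[X in (_ <= X)%N](size_iota 0 n) find_size.
have pm : forall j, (j < n)%N -> p j.+1 = (j < m)%N.
  move=> j jn; case: (ltnP j m) => jm.
    have := before_find 0 jm; rewrite nth_iota // add0n.
    by move/negbFE.
  have mn' : (m < n)%N by apply: leq_ltn_trans jm jn.
  have hh : has (fun j => ~~ p j.+1) (iota 0 n) by rewrite has_find size_iota.
  have := nth_find 0 hh; rewrite -/m nth_iota // add0n => /negbTE pmF.
  apply/negbTE/negP => pj; move: pmF; rewrite /p.
  by rewrite (le_trans _ pj) // ler_nat.
set u := opt / k%:R.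
set t1 := (1 + eps R) / 2%:R * u.
set t2 := (1 - delta R) / 2%:R * u.
set s1 := take m s; set s2 := drop m s.
have sz1 : size s1 = m by rewrite size_takel.
have sz2 : size s2 = (n - m)%N by rewrite size_drop.
have seg1 : seg_thr f k n opt 1 s1 t1.
  move=> j e X; rewrite sz1 => /andP[h1 h2].
  have pj : p j by rewrite -(prednK h1) pm; lia.
  rewrite /alg3_accept -/t1 -/u; rewrite /p in pj; rewrite pj /=.
  by rewrite ltNge pj /= orbF.
have seg2 : seg_thr f k n opt (1 + m) s2 t2.
  move=> j e X; rewrite sz2 => /andP[h1 h2].
  have pj : p j = false by rewrite -(prednK (_ : 0 < j)%N) ?pm; lia.
  rewrite /alg3_accept -/t2 -/u; rewrite /p in pj; rewrite pj /=.
  by rewrite ltNge pj.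
set SL' := alg3_run f k n opt 1 s1 set0.
have hS : S = alg3_run f k n opt (1 + m) s2 SL'.
  by rewrite /S /alg3 -/n -/opt -{1}(cat_take_drop m s) run_cat sz1.
have dis : forall x, x \in s1 -> x \in s2 -> False.
  move=> x x1 x2; move: us; rewrite -(cat_take_drop m s) cat_uniq => /and3P[_ /hasP H _].
  by apply: H; exists x.
have ep : forall X x, (x \in early_part R s X) = (x \in X) && (x \in s1).
  move=> X x; rewrite inE /s1 in_take // -/n.
  by congr andb; rewrite -pm // index_mem.
have SLe : SL = SL'.
  apply/setP=> x; rewrite ep; apply/idP/idP.
    move=> /andP[xS x1]; move: xS; rewrite hS => /run_sub /orP[//|x2].
    by case: (dis x x1 x2).
  move=> xL; apply/andP; split.
    by rewrite hS; apply: (subsetP (run_grow _ _ _ _ _ _ _)).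
  by move: xL => /run_sub; rewrite inE.
rewrite SLe in hSL.
pose z : R := (10%:R ^+ 8)^-1.
have n10 : forall e, 10%:R ^+ e != 0 :> R by move=> e; rewrite expf_neq0 // pnatr_eq0.
have hz0 : 0 < z by rewrite /z invr_gt0 exprn_gt0 // ltr0n.
have hzz : z * (10000%:R * 10000%:R) = 1.
  have e4 : 10000%:R = 10%:R ^+ 4 :> R by rewrite -natrX.
  by rewrite e4 -exprD mulVf.
have e3 : 1000%:R = 10%:R ^+ 3 :> R by rewrite -natrX.
have e4 : 10000%:R = 10%:R ^+ 4 :> R by rewrite -natrX.
have heps : eps R = z by [].
have hdel : delta R = 3%:R * (z * (1000%:R)^-1).
  by rewrite /delta /z e3 -invfM -exprD.
have h9 : 9%:R / 10%:R ^+ 12 = 9%:R * (z * (10000%:R)^-1) :> R.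
  by rewrite /z e4 -invfM -exprD.
have hbeta : beta R = (1000%:R)^-1 by [].
have halpha : alpha R = 3%:R / 1000%:R by [].
have opt0 : 0 <= opt by rewrite -fO.
have K0 : 0 < k%:R :> R by rewrite ltr0n.
have hopt : opt = k%:R * u by rewrite /u mulrC divfK // gt_eqF.
have u0 : 0 <= u by rewrite /u divr_ge0 // ltW.
rewrite h9.
have cS : (#|S| <= k)%N by rewrite hS; apply: run_card; apply: run_card; rewrite cards0.
have subLS : SL' \subset S by rewrite hS; apply: run_grow.
case: (ltnP #|S| k) => hk; last first.
  have eSk : #|S| = k by apply/eqP; rewrite eqn_leq cS hk.
  have g1 := run_gain set0 seg1.
  have g2 := run_gain SL' seg2.
  rewrite -hS eSk cards0 norm add0r mulr0 addr0 in g1 g2.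
  rewrite /t1 /t2 heps hdel in g1 g2.
  rewrite halpha hopt in hSL.
  rewrite hopt; apply: (arith_full R z u k%:R #|SL'|%:R (f S) (f SL') hz0 hzz u0 (ler0n _ _) _ g1 g2 hSL).
  by rewrite ler_nat -eSk subset_leq_card.
have hkL : (#|SL'| < k)%N by apply: leq_ltn_trans hk; apply: subset_leq_card.
have key : forall x, x \in O -> marg f x S <= (if x \in s1 then t1 else t2).
  move=> x _; case: (boolP (x \in S)) => xS.
    rewrite /marg (setUidPr _); last by rewrite sub1set.
    rewrite subrr; case: ifP => _; rewrite /t1 /t2 ?heps ?hdel; apply: mulr_ge0 => //; apply: divr_ge0 => //; lra.
  case: ifP => x1.
    have xL : x \notin SL' by apply: contra xS; apply: (subsetP subLS).
    apply: le_trans (ltW (run_rej mono subm seg1 x1 xL hkL)).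
    exact: marg_DR.
  have x2 : x \in s2 by move: (full x); rewrite -(cat_take_drop m s) mem_cat -/s1 x1.
  by apply: ltW; rewrite hS; apply: run_rej => //; rewrite -hS.
have sumb : opt <= f S + \sum_(x in O) marg f x S.
  rewrite -fO -big_enum /=; apply: (le_trans _ (submod_sum _ _ _ mono subm S (enum O))).
  by apply: mono; rewrite set_enum subsetUr.
have OLO : OL \subset O.
  by apply/subsetP => y; rewrite /OL (ep O y) => /andP[].
have cOL : (#|OL| <= k)%N by rewrite -cardO subset_leq_card.
have sumG : \sum_(x in O) marg f x S <= t1 * #|OL|%:R + t2 * (k - #|OL|)%N%:R.
  apply: le_trans (_ : \sum_(x in O) (if x \in s1 then t1 else t2) <= _).
    by apply: ler_sum => x xO; apply: key.
  rewrite (big_setID OL) /= (setIidPr OLO).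
  rewrite (eq_bigr (fun _ => t1)); last first.
    move=> x hx; have : x \in early_part R s O := hx.
    by rewrite (ep O x) => /andP[_ ->].
  rewrite [X in _ + X](eq_bigr (fun _ => t2)); last first.
    move=> x hx; have [xO h] := setDP hx; have : x \notin early_part R s O := h.
    by rewrite (ep O x) xO /= => /negbTE ->.
  rewrite !sumr_const cardsD (setIidPr OLO) cardO !mulr_natr; exact: lexx.
rewrite natrB // in sumG.
have g := le_trans sumb (lerD (lexx _) sumG).
rewrite /t1 /t2 heps hdel in g.
rewrite hbeta in hOL.
exact: (arith_part R z u k%:R #|OL|%:R (f S) hz0 u0 (ler0n _ _) (ltW K0) hopt hOL g).
Qed.
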